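(* Let $m,k$ be natural numbers. If the first term in the hereditary representation in base $k+1$ of the $k$-th term $G(k,m)$ of the Goodstein sequence $G(m)$ is of the form $1\cdot(k+1)^{l}$ with $k+1\le l$, then $G(k+1,m)>G(k,m)$.
   Context: For a natural number base $b>1$, the hereditary representation $m\langle b\rangle$ of $m$ is $\sum_{i=0}^{l} a_i b^{i}$ with $0\le a_i<b$, $a_l\ne0$, each exponent itself written in hereditary representation in base $b$, recursively; its first (leading) term is $a_l b^{l}$. $m\langle b\rangle''$ is obtained by syntactically replacing every $b$ by $b+1$ in $m\langle b\rangle$. The Goodstein sequence $G(m)=\{m, m''-1, (m''-1)''-1,\dots\}$ starts from $m$ in base $2$; its $n$-th term is $G(n,m)$, with $G(1,m)=m$ in base $2$, $G(k,m)$ written in base $k+1$, and $G(k+1,m)=G(k,m)\langle k+1\rangle''-1$. *)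

(* Defs.v *)
From mathcomp Require Import all_boot.
Set Implicit Arguments. Unset Strict Implicit. Unset Printing Implicit Defensive.

Definition digit (b m i : nat) : nat := (m %/ b ^ i) %% b.

(* exponent l of the leading term a_l b^l of m (m > 0, b > 1) *)
Definition lead_exp (b m : nat) : nat := trunc_log b m.

Definition lead_digit (b m : nat) : nat := digit b m (lead_exp b m).

(* hbump_fuel f b m : value of m<b>'' (every b replaced by b+1 in the
   hereditary base-b representation), computed with fuel f.
   m = sum_{i<=l} a_i b^i  |->  sum_{i<=l} a_i (b+1)^(i<b>''). *)
Fixpoint hbump_fuel (f b m : nat) : nat :=
  match f with
  | 0 => 0
  | f'.+1 => sumn [seq digit b m i * b.+1 ^ hbump_fuel f' b i | i <- iota 0 (trunc_log b m).+1]
  end.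

(* exponents i <= trunc_log b m < m, so fuel m.+1 suffices *)
Definition hbump (b m : nat) : nat := hbump_fuel m.+1 b m.

(* goodstein k m = G(k,m): G(1,m) = m, G(k+1,m) = G(k,m)<k+1>'' - 1.
   (index 0 is a dummy value, unused) *)
Fixpoint goodstein (k m : nat) : nat :=
  match k with
  | 0 => m
  | k'.+1 => if k' is 0 then m else hbump k' .+1 (goodstein k' m) - 1
  end.

(* Main.v *)
Require Import Defs.
From mathcomp Require Import all_boot.
From mathcomp Require Import zify.

Lemma digits_mod b x n : 1 < b ->
  x %% b ^ n = \sum_(0 <= i < n) digit b x i * b ^ i.
Proof.
move=> b1; elim: n => [|n IH]; first by rewrite big_geq // expn0 modn1.
rewrite big_nat_recr //= -IH /digit.
set q := x %/ b ^ n.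
have Hx : x = q %/ b * b ^ n.+1 + (q %% b * b ^ n + x %% b ^ n).
  rewrite {1}(divn_eq x (b ^ n)) -/q {1}(divn_eq q b) expnS; lia.
rewrite {1}Hx modnMDl modn_small; first lia.
have h1 : x %% b ^ n < b ^ n by rewrite ltn_mod expn_gt0; lia.
have h2 : q %% b < b by rewrite ltn_mod; lia.
rewrite expnS.
have : q %% b * b ^ n + b ^ n <= b * b ^ n by rewrite -mulSnr leq_mul2r h2 orbT.
lia.
Qed.

Lemma hbump_fuelE f b x :
  hbump_fuel f.+1 b x =
  \sum_(0 <= i < (trunc_log b x).+1) digit b x i * b.+1 ^ hbump_fuel f b i.
Proof. by rewrite /= sumnE big_map /index_iota subn0 /= big_cons. Qed.

Lemma expn_mono {m n} e : m <= n -> m ^ e <= n ^ e.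
Proof. by move=> h; elim: e => // e IH; rewrite !expnS leq_mul. Qed.

Lemma pow_le b i j : 1 < b -> i <= j -> b ^ i <= b.+1 ^ j.
Proof.
move=> b1 hij; apply: (@leq_trans (b.+1 ^ i)); first exact: expn_mono.
exact: leq_pexp2l.
Qed.

Lemma tl_lt {b x} : 1 < b -> 0 < x -> trunc_log b x < x.
Proof.
move=> b1 x0; apply: (leq_trans _ (trunc_logP b1 x0)); exact: ltn_expl.
Qed.

Lemma hbump_ge f b x : 1 < b -> x < f -> x <= hbump_fuel f b x.
Proof.
move=> b1; elim: f x => [|f IH] x hx //.
case: x hx => [|x] hx; first by [].
rewrite hbump_fuelE.
have E : x.+1 = \sum_(0 <= i < (trunc_log b x.+1).+1) digit b x.+1 i * b ^ i.
  by rewrite -digits_mod // modn_small // trunc_log_ltn.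
rewrite {1}E big_nat_cond [X in _ <= X]big_nat_cond; apply: leq_sum => i /andP [/andP [_ hi] _].
rewrite leq_mul2l; apply/orP; right.
apply: pow_le => //; apply: IH.
have := tl_lt b1 (ltn0Sn x); lia.
Qed.

Theorem lemma4 (m k : nat) :
  0 < k ->
  0 < goodstein k m ->
  lead_digit k.+1 (goodstein k m) = 1 ->
  k.+1 <= lead_exp k.+1 (goodstein k m) ->
  goodstein k.+1 m > goodstein k m.
Proof.
move=> k0.
have -> : goodstein k.+1 m = hbump k.+1 (goodstein k m) - 1.
  by case: k k0.
move: (goodstein k m) => n n0.
rewrite /lead_digit /lead_exp /hbump hbump_fuelE.
set b := k.+1; set l := trunc_log b n => hd hl.
have b1 : 1 < b by rewrite /b; lia.
rewrite big_nat_recr //= hd mul1n.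
have Hn : n = \sum_(0 <= i < l) digit b n i * b ^ i + b ^ l.
  have E : n = n %% b ^ l.+1 by rewrite modn_small // trunc_log_ltn.
  by rewrite {1}E digits_mod // big_nat_recr //= hd mul1n.
have S : \sum_(0 <= i < l) digit b n i * b ^ i <=
         \sum_(0 <= i < l) digit b n i * b.+1 ^ hbump_fuel n b i.
  rewrite big_nat_cond [X in _ <= X]big_nat_cond; apply: leq_sum => i /andP [/andP [_ hi] _].
  rewrite leq_mul2l; apply/orP; right.
  apply: pow_le => //; apply: hbump_ge => //.
  have := tl_lt b1 n0; rewrite -/l; lia.
have T : b ^ l + 2 <= b.+1 ^ hbump_fuel n b l.
  have hh : l <= hbump_fuel n b l.
    apply: hbump_ge => //; exact: tl_lt.
  apply: leq_trans (leq_pexp2l (ltn0Sn b) hh).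
  have [l' El] : exists l', l = l'.+2 by exists l.-2; rewrite /b in hl; lia.
  rewrite El !expnS.
  have e1 : b ^ l' <= b.+1 ^ l' := expn_mono l' (leqnSn b).
  have e3 : 0 < b ^ l' by rewrite expn_gt0; lia.
  nia.
lia.
Qed.
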